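(* For every $n\geq1$, the number of $D_{2n}$-orbits of $\mathbf{X}_n$ whose elements have a stabilizer not contained in the rotation subgroup $\langle\sigma\rangle=\{1,\sigma,\dots,\sigma^{n-1}\}$ equals $r(n)$.
   Context: For $n\geq1$ let $V_n=\{v_0,\dots,v_{n-1}\}$, indices modulo $n$. The dihedral group $D_{2n}=\{1,\sigma,\dots,\sigma^{n-1},\tau,\sigma\tau,\dots,\sigma^{n-1}\tau\}$ acts on subsets of $V_n$ elementwise, with $\sigma(v_i)=v_{i+1}$, $\tau(v_i)=v_{n-i}$. Let $\mathbf{X}_n$ be the family of subsets $X\subseteq V_n$ such that (a) there is no $i\in\mathbb{Z}_n$ with $v_i,v_{i+1}\in X$, and (b) for every $i\in\mathbb{Z}_n$ at least one of $v_i,v_{i+1},v_{i+2}$ lies in $X$ (for $n\geq 3$: the maximal independent sets of the cycle graph $C_n$). For $X\in\mathbf{X}_n$, $\mathrm{Stab}(X)=\{g\in D_{2n}:g(X)=X\}$. The Padovan sequence is $q(1)=0$, $q(2)=1$, $q(3)=1$, $q(n)=q(n-2)+q(n-3)$ for $n\geq4$, and $r(2k-1)=q(k)$, $r(2k)=q(k+2)$ for $k\geq1$. *)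

(* Defs.v *)
From mathcomp Require Import all_boot.
Set Implicit Arguments. Unset Strict Implicit. Unset Printing Implicit Defensive.

(* Vertices v_0..v_{n-1} are represented by 'I_n; a subset X of V_n is a
   {set 'I_n}.  Indices are taken modulo n. *)

Definition inX (n : nat) (X : {set 'I_n}) (i : nat) : bool :=
  [exists j in X, nat_of_ord j == i %% n].

(* The dihedral group D_{2n}: the element (k, false) is sigma^k and the
   element (k, true) is sigma^k tau.  These are 2n distinct group elements. *)
Definition dih (n : nat) : finType := ('I_n * bool)%type.

(* Action on vertex indices: sigma^k (v_i) = v_{i+k},
   sigma^k tau (v_i) = sigma^k (v_{n-i}) = v_{k+n-i}. *)
Definition act_idx (n : nat) (g : dih n) (i : nat) : nat :=
  if g.2 then (g.1 + (n - i)) %% n else (g.1 + i) %% n.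

Definition act_set (n : nat) (g : dih n) (X : {set 'I_n}) : {set 'I_n} :=
  [set j : 'I_n | [exists v in X, nat_of_ord j == act_idx g v]].

Definition Xfam (n : nat) : {set {set 'I_n}} :=
  [set X : {set 'I_n} |
     [forall i : 'I_n, ~~ (inX X i && inX X i.+1)] &&
     [forall i : 'I_n, [|| inX X i, inX X i.+1 | inX X i.+2]]].

Definition Stab (n : nat) (X : {set 'I_n}) : {set dih n} :=
  [set g : dih n | act_set g X == X].

Definition rotations (n : nat) : {set dih n} := [set g : dih n | ~~ g.2].

Definition orbit_of (n : nat) (X : {set 'I_n}) : {set {set 'I_n}} :=
  [set act_set g X | g : dih n].

Definition refl_orbits (n : nat) : {set {set {set 'I_n}}} :=
  [set orbit_of X | X in [set X in Xfam n | ~~ (Stab X \subset rotations n)]].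

(* Padovan sequence: q 1 = 0, q 2 = 1, q 3 = 1, q n = q (n-2) + q (n-3).
   (q 0 is unused.) *)
Fixpoint padq (n : nat) : nat :=
  match n with
  | 0 | 1 => 0
  | 2 | 3 => 1
  | S (S ((S ((S m) as a)) as b)) => padq b + padq a
  end.

(* r(2k-1) = q(k), r(2k) = q(k+2). *)
Definition padr (n : nat) : nat :=
  if odd n then padq (n.+1)./2 else padq (n./2 + 2).

(* Main.v *)
Require Import Defs.
From HB Require Import structures.
From mathcomp Require Import all_boot fingroup morphism action ssralg zmodp.
From mathcomp Require Import zify.
Set Implicit Arguments. Unset Strict Implicit. Unset Printing Implicit Defensive.

Fixpoint words (k : nat) : seq (seq bool) :=
  if k is k'.+1 then map (cons true) (words k') ++ map (cons false) (words k')
  else [:: [::]].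

Lemma mem_words k s : (s \in words k) = (size s == k).
Proof.
elim: k s => [|k IH] s; first by case: s.
rewrite /= mem_cat; case: s => [|b s] /=.
  by apply/negbTE/negP => /orP[] /mapP[t].
have cinj : forall c, injective (cons c : seq bool -> seq bool) by move=> c x y [].
case: b; rewrite !(mem_map (cinj _)) IH eqSS.
  by apply/orP/idP => [[//|/mapP[t]//]|->]; left.
by apply/orP/idP => [[/mapP[t]//|//]|->]; right.
Qed.

Lemma uniq_words k : uniq (words k).
Proof.
elim: k => [|k IH] //=; rewrite cat_uniq !map_inj_uniq ?IH //; try by move=> ? ? [].
by rewrite andbT; apply/hasPn => s /mapP[t _ ->]; apply/mapP => -[u].
Qed.

Lemma count_wordsS k (P : pred (seq bool)) :
  count P (words k.+1) = count (fun s => P (true :: s)) (words k) + count (fun s => P (false :: s)) (words k).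
Proof. by rewrite /= count_cat !count_map. Qed.

Lemma count_bij (n k : nat) (f g : seq bool -> seq bool) (Q P : pred (seq bool)) :
  (forall v, size v = k -> [/\ size (f v) = n, Q (f v) & g (f v) = v]) ->
  (forall L, size L = n -> Q L -> size (g L) = k /\ f (g L) = L) ->
  count (fun L => Q L && P L) (words n) = count (fun v => P (f v)) (words k).
Proof.
move=> Hf Hg.
have -> : count (fun L => Q L && P L) (words n) = count P (filter Q (words n)).
  by rewrite count_filter; apply: eq_count => L /=; rewrite andbC.
have pe : perm_eq (filter Q (words n)) (map f (words k)).
  apply: uniq_perm; first exact/filter_uniq/uniq_words.
    rewrite map_inj_in_uniq ?uniq_words // => v w.
    rewrite !mem_words => /eqP sv /eqP sw e.
    by have [_ _ <-] := Hf v sv; have [_ _ <-] := Hf w sw; rewrite e.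
  move=> L; rewrite mem_filter mem_words; apply/andP/mapP => [[QL /eqP sL]|[v]].
    have [sg fg] := Hg L sL QL; exists (g L) => //; by rewrite mem_words sg.
  by rewrite mem_words => /eqP sv ->; have [-> -> _] := Hf v sv.
by rewrite (permP pe) count_map.
Qed.

Lemma pal_even h (P : pred (seq bool)) :
  count (fun L => (L == rev L) && P L) (words h.*2) = count (fun v => P (v ++ rev v)) (words h).
Proof.
apply: (count_bij (g := take h)) => [v sv|L sL /eqP pL].
  by rewrite size_cat size_rev sv addnn rev_cat revK eqxx take_size_cat.
have st : size (take h L) = h by rewrite size_takel // sL -addnn leq_addr.
split => //.
have -> : rev (take h L) = drop h L.
  by rewrite {1}pL take_rev sL -addnn addnK revK.
exact: cat_take_drop.
Qed.

Lemma pal_odd h (P : pred (seq bool)) :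
  count (fun L => (L == rev L) && P L) (words h.*2.+1) =
  count (fun v => P (v ++ behead (rev v))) (words h.+1).
Proof.
apply: (count_bij (g := take h.+1)) => [v sv|L sL /eqP pL].
  case/lastP: v sv => [//|w c]; rewrite size_rcons => -[sw].
  rewrite rev_rcons /= size_cat size_rcons size_rev sw addSn addnn.
  by rewrite take_size_cat ?size_rcons ?sw // rev_cat revK cat_rcons rev_rcons eqxx.
have st : size (take h.+1 L) = h.+1 by rewrite size_takel // sL -addnn ltnS leq_addr.
split => //.
have -> : rev (take h.+1 L) = drop h L.
  by rewrite {1}pL take_rev sL (_ : h.*2.+1 - h.+1 = h) ?revK //; lia.
by rewrite -drop1 drop_drop add1n cat_take_drop.
Qed.

Definition W3 (x y z : bool) := [&& ~~ (x && y), ~~ (y && z) & [|| x, y | z]].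
Lemma W3C x y z : W3 x y z = W3 z y x.
Proof. by case: x; case: y; case: z. Qed.

Fixpoint okw (s : seq bool) : bool :=
  match s with
  | x :: ((y :: z :: _) as t) => W3 x y z && okw t
  | _ => true
  end.

Lemma okw_iota (f : nat -> bool) s mm :
  okw (map f (iota s mm)) <-> (forall j, j + 2 < mm -> W3 (f (s + j)) (f (s + j).+1) (f (s + j).+2)).
Proof.
elim: mm s => [|[|[|mm]] IH] s; try by split => // _ j; lia.
have -> : okw (map f (iota s mm.+3)) =
   W3 (f s) (f s.+1) (f s.+2) && okw (map f (iota s.+1 mm.+2)) by [].
split.
  move=> /andP[h1 /IH h2] [|j] lj; first by rewrite addn0.
  by rewrite -addSnnS; apply: h2; lia.
move=> H; apply/andP; split; first by have := H 0; rewrite addn0; apply.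
apply/IH => j lj; rewrite addSnnS; apply: H; lia.
Qed.

Definition cycb (L : seq bool) i := nth false L (i %% size L).
Definition cycok (L : seq bool) :=
  all (fun i => W3 (cycb L i) (cycb L i.+1) (cycb L i.+2)) (iota 0 (size L)).

Section Seg.
Variables (b : nat -> bool) (n R mm : nat).
Hypotheses (n0 : 0 < n) (per : forall p, b (p + n) = b p)
  (sym : forall p, p <= R -> b (R - p) = b p)
  (hR : n.*2 <= R.+1) (hR2 : R + 5 <= n + mm.*2) (hm : 3 <= mm).

Lemma perq p q : b (p + q * n) = b p.
Proof. by elim: q => [|q IH]; rewrite ?mul0n ?addn0 // mulSn addnCA addnC per IH. Qed.

Lemma W3per i : W3 (b i) (b i.+1) (b i.+2) = W3 (b (i %% n)) (b (i %% n).+1) (b (i %% n).+2).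
Proof.
have e t : b (i + t) = b (i %% n + t).
  by rewrite {1}(divn_eq i n) -addnA addnC perq.
have e0 := e 0; have e1 := e 1; have e2 := e 2.
rewrite !addn0 !addn1 !addn2 in e0 e1 e2; by rewrite e0 e1 e2.
Qed.

Lemma seg_ok : okw (map b (iota n.-1 mm)) -> forall i, W3 (b i) (b i.+1) (b i.+2).
Proof.
move/okw_iota => H i; rewrite W3per; have := ltn_pmod i n0.
move: (i %% n) => k lk.
case: (ltngtP k n.-1) => [lk1|lk1|->]; last 2 first.
- lia.
- by have := H 0; rewrite addn0; apply; lia.
case: (leqP (k + 4) mm) => km.
  have := H k.+1; rewrite -[n.-1 + _]/(n.-1 + k.+1) (_ : n.-1 + k.+1 = k + n); last by lia.
  by rewrite -!addSn !per; apply; lia.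
have := H (R - k - 2 - n.-1).
rewrite (_ : n.-1 + (R - k - 2 - n.-1) = R - k.+2); last by lia.
rewrite (_ : (R - k.+2).+1 = R - k.+1); last by lia.
rewrite (_ : (R - k.+1).+1 = R - k); last by lia.
rewrite !sym; try lia.
by rewrite W3C; apply; lia.
Qed.
End Seg.

Lemma cycb_per L p : cycb L (p + size L) = cycb L p.
Proof. by rewrite /cycb modnDr. Qed.

Lemma cycokP L : 0 < size L ->
  cycok L <-> (forall i, W3 (cycb L i) (cycb L i.+1) (cycb L i.+2)).
Proof.
move=> n0; split => [/allP H i|H]; last by apply/allP => i _; apply: H.
rewrite (W3per (cycb_per L) i); apply: H; rewrite mem_iota /=.
exact: ltn_pmod.
Qed.

Lemma cycb_seg L k : 0 < size L -> k <= size L ->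
  map (cycb L) (iota (size L).-1 k.+1) = last false L :: take k L.
Proof.
move=> n0 kn; rewrite /= /cycb modn_small ?prednK // ?ltn_predL // nth_last; congr cons.
rewrite (_ : iota (size L) k = map (addn (size L)) (iota 0 k)); last by rewrite -iotaDl addn0.
rewrite -map_comp -(map_nth_iota0 false kn).
apply/eq_in_map => j; rewrite mem_iota /= add0n => jk.
by rewrite addnC modnDr modn_small //; apply: leq_trans jk kn.
Qed.

Lemma seg_iff (b : nat -> bool) (n R mm : nat) :
  0 < n -> (forall p, b (p + n) = b p) ->
  (forall p, p <= R -> b (R - p) = b p) ->
  n.*2 <= R.+1 -> R + 5 <= n + mm.*2 -> 3 <= mm ->
  (forall i, W3 (b i) (b i.+1) (b i.+2)) <-> okw (map b (iota n.-1 mm)).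
Proof.
move=> n0 per sym hR hR2 hm; split => H; last exact: (seg_ok n0 per sym hR hR2 hm H).
by apply/okw_iota => j _; apply: H.
Qed.

Lemma pal_cycb L : 0 < size L -> L = rev L -> forall p, p <= (size L).*2.-1 ->
  cycb L ((size L).*2.-1 - p) = cycb L p.
Proof.
move=> n0 pL p lp; rewrite /cycb.
have ev j : j < size L -> nth false L j = nth false L (size L - j.+1).
  by move=> jn; rewrite {1}pL nth_rev.
case: (ltnP p (size L)) => pn.
  have e : (size L).*2.-1 - p = (size L - p.+1) + size L by lia.
  rewrite (modn_small pn) e modnDr modn_small; last by lia.
  by rewrite [RHS]ev.
have e1 : (size L).*2.-1 - p < size L by lia.
have e2 : p = (p - size L) + size L by lia.
have e3 : p - size L < size L by lia.
rewrite (modn_small e1) {2}e2 modnDr (modn_small e3) ev //.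
congr nth; lia.
Qed.

Lemma sym0_cycb L : 0 < size L -> behead L = rev (behead L) ->
  forall p, p <= (size L).*2 -> cycb L ((size L).*2 - p) = cycb L p.
Proof.
move=> n0 pL.
have ev j : 0 < j < size L -> nth false L j = nth false L (size L - j).
  case: L n0 pL => [//|c t] _ pt /andP[j0 jn]; rewrite /= in pt jn *.
  case: j j0 jn => [//|j] _ jn /=; rewrite subSS {1}pt nth_rev //.
  by rewrite (_ : size t - j = (size t - j.+1).+1) //; lia.
move=> p lp; rewrite /cycb.
case: (ltnP p (size L)) => pn.
  case: p pn lp => [|p] pn lp; first by rewrite subn0 mod0n -addnn modnDr modnn.
  have e : (size L).*2 - p.+1 = (size L - p.+1) + size L by lia.
  rewrite (modn_small pn) e modnDr modn_small; last by lia.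
  by rewrite [RHS]ev //; lia.
case: (ltnP p (size L).*2) => p2; last first.
  have -> : p = (size L).*2 by lia.
  by rewrite subnn mod0n -addnn modnDr modnn.
case: (posnP (p - size L)) => p0.
  have -> : p = size L by lia.
  by rewrite -addnn addnK modnn.
have e1 : (size L).*2 - p < size L by lia.
have e2 : p = (p - size L) + size L by lia.
have e3 : p - size L < size L by lia.
rewrite (modn_small e1) {2}e2 modnDr (modn_small e3) ev; last by lia.
congr nth; lia.
Qed.

Lemma last_rev (T : Type) (x : T) (s : seq T) : last x (rev s) = head x s.
Proof. by case: s => //= y s; rewrite rev_cons last_rcons. Qed.
Lemma head_rev (T : Type) (x : T) (s : seq T) : head x (rev s) = last x s.
Proof. by case/lastP: s => //= s y; rewrite rev_rcons last_rcons. Qed.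
Lemma head_def x y (s : seq bool) : 0 < size s -> head x s = head y s.
Proof. by case: s. Qed.
Lemma last_def x y (s : seq bool) : 0 < size s -> last x s = last y s.
Proof. by case: s. Qed.
Lemma take1 x (s : seq bool) : 0 < size s -> take 1 s = [:: head x s].
Proof. by case: s => //= y s; rewrite take0. Qed.

Lemma shapeEE v : 0 < size v ->
  cycok (v ++ rev v) = okw (head false v :: v ++ [:: last false v]).
Proof.
move=> v0.
have sL : size (v ++ rev v) = (size v).*2 by rewrite size_cat size_rev addnn.
have n0 : 0 < size (v ++ rev v) by rewrite sL double_gt0.
have pL : v ++ rev v = rev (v ++ rev v) by rewrite rev_cat revK.
have H1 := cycokP n0.
have H2 : (forall i, W3 (cycb (v ++ rev v) i) (cycb (v ++ rev v) i.+1) (cycb (v ++ rev v) i.+2))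
   <-> okw (map (cycb (v ++ rev v)) (iota (size (v ++ rev v)).-1 (size v).+2)).
  apply: (seg_iff (R := (size (v ++ rev v)).*2.-1)) => //.
  - exact: cycb_per.
  - exact: pal_cycb.
  - exact: leqSpred.
  - rewrite sL; lia.
have e : map (cycb (v ++ rev v)) (iota (size (v ++ rev v)).-1 (size v).+2) =
   head false v :: v ++ [:: last false v].
  rewrite cycb_seg ?sL; try lia; congr cons.
    by rewrite last_cat last_rev; apply: head_def.
  rewrite take_cat ltnNge leqnSn /= subSn // subnn (take1 false) ?size_rev //.
  by rewrite head_rev.
rewrite -e; apply/idP/idP => [/H1/H2 //|/H2/H1 //].
Qed.

Definition penult (v : seq bool) := head false (behead (rev v)).

Lemma Pfacts v : 1 < size v ->
  [/\ take (size v).+1 (v ++ behead (rev v)) = v ++ [:: penult v],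
      last false (v ++ behead (rev v)) = head false v,
      v ++ behead (rev v) = rev (v ++ behead (rev v)) &
      size (v ++ behead (rev v)) = (size v).*2.-1].
Proof.
case/lastP: v => [//|w c]; rewrite size_rcons ltnS => w0.
rewrite /penult rev_rcons /= cat_rcons; split.
- rewrite -cat_rcons take_cat size_rcons ltnNge leqnSn /= subSn // subnn.
  by rewrite (take1 false) // size_rev.
- rewrite last_cat /= last_rev; case: w w0 => //.
- by rewrite rev_cat rev_cons revK cat_rcons.
- by rewrite size_cat /= size_rev; lia.
Qed.

Lemma shapeP v : 1 < size v ->
  cycok (v ++ behead (rev v)) = okw (head false v :: v ++ [:: penult v]).
Proof.
move=> v1; have [Ht Hl pL sL] := Pfacts v1.
have n0 : 0 < size (v ++ behead (rev v)) by rewrite sL; lia.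
have H1 := cycokP n0.
have H2 : (forall i, W3 (cycb (v ++ behead (rev v)) i) (cycb (v ++ behead (rev v)) i.+1)
                        (cycb (v ++ behead (rev v)) i.+2))
   <-> okw (map (cycb (v ++ behead (rev v))) (iota (size (v ++ behead (rev v))).-1 (size v).+2)).
  apply: (seg_iff (R := (size (v ++ behead (rev v))).*2.-1)) => //.
  - exact: cycb_per.
  - exact: pal_cycb.
  - exact: leqSpred.
  - rewrite sL; lia.
  - lia.
have e : map (cycb (v ++ behead (rev v))) (iota (size (v ++ behead (rev v))).-1 (size v).+2) =
   head false v :: v ++ [:: penult v].
  by rewrite cycb_seg ?sL ?Ht ?Hl //; lia.
rewrite -e; apply/idP/idP => [/H1/H2 //|/H2/H1 //].
Qed.

Lemma shapeV c v : 1 < size v ->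
  cycok (c :: v ++ behead (rev v)) = okw (head false v :: c :: v ++ [:: penult v]).
Proof.
move=> v1; have [Ht Hl pL sL] := Pfacts v1.
set L := c :: v ++ behead (rev v).
have sL' : size L = (size v).*2 by rewrite /L /= sL; lia.
have n0 : 0 < size L by rewrite sL'; lia.
have H1 := cycokP n0.
have H2 : (forall i, W3 (cycb L i) (cycb L i.+1) (cycb L i.+2))
   <-> okw (map (cycb L) (iota (size L).-1 (size v).+3)).
  apply: (seg_iff (R := (size L).*2)) => //.
  - exact: cycb_per.
  - exact: sym0_cycb.
  - rewrite sL'; lia.
have e : map (cycb L) (iota (size L).-1 (size v).+3) = head false v :: c :: v ++ [:: penult v].
  rewrite cycb_seg ?sL'; try lia.
  rewrite /L /= -Hl; congr cons; first by apply: last_def; lia.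
  by rewrite Ht.
rewrite -e; apply/idP/idP => [/H1/H2 //|/H2/H1 //].
Qed.

Lemma count_andl (c : bool) (P : pred (seq bool)) s :
  count (fun u => c && P u) s = c * count P s.
Proof. by case: c; rewrite ?mul1n ?mul0n // count_pred0. Qed.

Lemma penult_cons x s : 1 < size s -> penult (x :: s) = penult s.
Proof.
rewrite /penult rev_cons -(size_rev s); case: (rev s) => [|a [|b r]] //= _.
Qed.

Definition Te m x y := count (fun u => okw (x :: y :: u ++ [:: last y u])) (words m).
Definition Tv m x y := count (fun u => okw (x :: y :: u ++ [:: penult (x :: y :: u)])) (words m).

Lemma TeS m x y : Te m.+1 x y = W3 x y true * Te m y true + W3 x y false * Te m y false.
Proof. by rewrite /Te count_wordsS /= !count_andl. Qed.

Lemma TvS m x y : Tv m.+1 x y = W3 x y true * Tv m y true + W3 x y false * Tv m y false.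
Proof.
rewrite /Tv count_wordsS /=; congr addn; rewrite -count_andl; apply: eq_count => u /=;
  by rewrite penult_cons.
Qed.

Lemma pad3 (F : nat -> bool -> bool -> nat) :
  (forall m x y, F m.+1 x y = W3 x y true * F m y true + W3 x y false * F m y false) ->
  F 0 true true = 0 ->
  forall m x y, F m.+3 x y = F m.+1 x y + F m x y.
Proof.
move=> rec F0 m.
have F11 : forall k, F k true true = 0 by case=> // k; rewrite rec.
by case; case; rewrite !rec /= ?F11; lia.
Qed.

Lemma Te3 m x y : Te m.+3 x y = Te m.+1 x y + Te m x y.
Proof. exact: (pad3 TeS). Qed.
Lemma Tv3 m x y : Tv m.+3 x y = Tv m.+1 x y + Tv m x y.
Proof. exact: (pad3 TvS). Qed.

Definition fP h := count (fun v => okw (head false v :: v ++ [:: penult v])) (words h.+2).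
Definition fE h := count (fun v => okw (head false v :: v ++ [:: last false v])) (words h.+1).
Definition fV h := count (fun v => okw (head false v :: true :: v ++ [:: penult v])) (words h.+2)
                 + count (fun v => okw (head false v :: false :: v ++ [:: penult v])) (words h.+2).

Lemma fPE h : fP h = Tv h.+1 true true + Tv h.+1 false false.
Proof.
rewrite /fP count_wordsS /Tv; congr addn; apply: eq_in_count => u;
  by rewrite mem_words => /eqP su /=; rewrite (penult_cons _ (s := _ :: u)) //= su.
Qed.

Lemma fEE h : fE h = Te h true true + Te h false false.
Proof. by rewrite /fE count_wordsS. Qed.

Lemma fVc h c : count (fun v => okw (head false v :: c :: v ++ [:: penult v])) (words h.+2) =
  W3 true c true * Tv h.+1 c true + W3 false c false * Tv h.+1 c false.
Proof.
rewrite count_wordsS /Tv -!count_andl; congr addn; apply: eq_in_count => u;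
  by rewrite mem_words => /eqP su /=; rewrite (penult_cons _ (s := _ :: u)) //= su.
Qed.

Lemma fP3 h : fP h.+3 = fP h.+1 + fP h.
Proof. rewrite !fPE !Tv3; lia. Qed.
Lemma fE3 h : fE h.+3 = fE h.+1 + fE h.
Proof. rewrite !fEE !Te3; lia. Qed.
Lemma fV3 h : fV h.+3 = fV h.+1 + fV h.
Proof. rewrite /fV !fVc !Tv3; lia. Qed.

Lemma ind3 (P : nat -> Prop) : P 0 -> P 1 -> P 2 ->
  (forall h, P h -> P h.+1 -> P h.+2 -> P h.+3) -> forall h, P h.
Proof.
move=> p0 p1 p2 st h.
have : P h /\ P h.+1 /\ P h.+2.
  elim: h => [|h [a [b c]]]; first by [].
  by split => //; split => //; apply: st.
by case.
Qed.

Lemma fP_pad h : fP h = padq h.+2.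
Proof.
elim/ind3: h => [||| h a b c]; try by vm_compute.
by rewrite fP3 a b.
Qed.

Lemma fEV_pad h : fE h.+1 + fV h = 2 * padq h.+4.
Proof.
elim/ind3: h => [||| h a b c]; try by vm_compute.
rewrite fE3 fV3 (_ : padq h.+3.+4 = padq h.+3.+2 + padq h.+3.+1) //; lia.
Qed.

Import GRing.Theory.

Section G.
Variable m : nat.
Definition dg := ('I_m.+1 * bool)%type.
HB.instance Definition _ := Finite.on dg.
Definition dmul (g h : dg) : dg :=
  ((if h.2 then h.1 - g.1 else h.1 + g.1)%R, g.2 (+) h.2).
Definition done_ : dg := (0%R, false).
Definition dinv (g : dg) : dg := if g.2 then g else ((- g.1)%R, false).
Lemma dmulA : associative dmul.
Proof.
case=> a [] [] b [] [] c [] /=; rewrite /dmul /=; congr pair;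
  rewrite ?opprD ?opprK ?addrA //; try (by rewrite addrAC);
  try (by rewrite -addrA (addrC (-b)%R) addrA).
Qed.
Lemma dmul1 : left_id done_ dmul.
Proof. by case=> a [] /=; rewrite /dmul /= ?subr0 ?addr0. Qed.
Lemma dmulV : left_inverse done_ dinv dmul.
Proof. by case=> a [] /=; rewrite /dmul /= ?subrr ?addrN. Qed.
HB.instance Definition _ := Finite_isGroup.Build dg dmulA dmul1 dmulV.
End G.

Section A.
Variable m : nat.
Local Notation n := m.+1.
Definition fmap (g : dg m) (i : 'I_n) : 'I_n := if g.2 then (g.1 - i)%R else (g.1 + i)%R.

Lemma fmap_val (g : dg m) (i : 'I_n) : nat_of_ord (fmap g i) = act_idx (g : dih n) i.
Proof.
rewrite /fmap /act_idx; case: g.2 => /=; last by [].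
by rewrite /= modnDmr.
Qed.

Lemma act_setE (g : dg m) X : act_set (g : dih n) X = fmap g @: X.
Proof.
apply/setP=> j; rewrite inE; apply/existsP/imsetP.
  by case=> v /andP[vX /eqP e]; exists v => //; apply: val_inj; rewrite /= fmap_val.
by case=> v vX ->; exists v; rewrite vX fmap_val eqxx.
Qed.

Lemma fmapM (g h : dg m) i : fmap (g * h)%g i = fmap h (fmap g i).
Proof.
case: g h => a [] [b []]; rewrite /fmap /= ?opprD ?opprK ?addrA //.
Qed.
End A.


Section A.
Variable m : nat.
Local Notation n := m.+1.
Local Notation one := (inZp 1 : 'I_n).

Lemma inXE (X : {set 'I_n}) j : inX X j = (inZp j \in X).
Proof.
apply/existsP/idP => [[x /andP[xX /eqP e]]|jX].
  by rewrite (_ : inZp j = x) //; apply: val_inj; rewrite /= e.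
by exists (inZp j); rewrite jX eqxx.
Qed.

Lemma inZpS (i : 'I_n) : inZp i.+1 = (i + one)%R :> 'I_n.
Proof. by apply: val_inj; rewrite /= modnDmr addn1. Qed.
Lemma inZpSS (i : 'I_n) : inZp i.+2 = (i + one + one)%R :> 'I_n.
Proof. by apply: val_inj; rewrite /= !modnDmr modnDml addn1 addn1. Qed.
Lemma inZp_ord (i : 'I_n) : inZp i = i.
Proof. by apply: val_inj; rewrite /= modn_small. Qed.

Lemma XfamE (X : {set 'I_n}) :
  (X \in Xfam n) = [forall i : 'I_n, W3 (i \in X) ((i+one)%R \in X) ((i+one+one)%R \in X)].
Proof.
rewrite inE; apply/andP/forallP => [[/forallP H1 /forallP H2] i|H].
  move: (H1 i) (H1 (i+one)%R) (H2 i); rewrite !inXE !inZpS inZpSS !inZp_ord.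
  by move=> h1 h2 h3; rewrite /W3 h1 h2 h3.


split; apply/forallP=> i; move: (H i) (H (i + one)%R);
  rewrite !inXE ?inZpSS ?inZpS inZp_ord.
  all: by case/and3P.
Qed.
End A.

Section A.
Variable m : nat.
Local Notation n := m.+1.
Local Notation one := (inZp 1 : 'I_n).
Local Open Scope group_scope.

Definition dact (X : {set 'I_n}) (g : dg m) : {set 'I_n} := fmap g @: X.
Lemma fmap1 i : fmap (1%g : dg m) i = i.
Proof. by rewrite /fmap /= add0r. Qed.
Lemma dact1 : dact^~ 1%g =1 id.
Proof. by move=> X; rewrite /dact (eq_imset _ fmap1) imset_id. Qed.
Lemma dactM X : act_morph dact X.
Proof.
move=> a b; rewrite /dact -imset_comp; apply: eq_imset => i /=.
by rewrite fmapM.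
Qed.
Definition dA := TotalAction dact1 dactM.

Lemma fmapK (g : dg m) : cancel (fmap g) (fmap g^-1).
Proof. by move=> i; rewrite -fmapM mulgV fmap1. Qed.
Lemma fmapKV (g : dg m) : cancel (fmap g^-1) (fmap g).
Proof. by move=> i; rewrite -fmapM mulVg fmap1. Qed.

Lemma mem_dact X g j : (j \in dact X g) = (fmap g^-1 j \in X).
Proof.
apply/imsetP/idP => [[i iX ->]|jX]; first by rewrite fmapK.
by exists (fmap g^-1 j); rewrite ?fmapKV.
Qed.

Lemma Xfam_act X g : X \in Xfam n -> dact X g \in Xfam n.
Proof.
rewrite !XfamE => /forallP H; apply/forallP => i; rewrite !mem_dact.
rewrite /fmap; case: (g^-1).2.
  set a := (g^-1).1.
  have e1 : (a - (i + one))%R = (a - i - one)%R by rewrite opprD addrA.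
  have e2 : (a - (i + one + one))%R = (a - i - one - one)%R by rewrite !opprD !addrA.
  have e3 : (a - i)%R = (a - i - one - one + one + one)%R by rewrite !subrK.
  rewrite e1 e2 {1}e3 W3C.
  by have := H (a - i - one - one)%R; rewrite !subrK.
by rewrite !addrA; apply: H.
Qed.
End A.

Section A.
Variable m : nat.
Local Notation n := m.+1.
Local Open Scope group_scope.

Definition Rset : {set {set 'I_n}} :=
  [set X in Xfam n | [exists g : dg m, g.2 && (dact X g == X)]].

Lemma dmul2 (a b : dg m) : (a * b).2 = a.2 (+) b.2.
Proof. by []. Qed.
Lemma dinv2 (a : dg m) : (a^-1).2 = a.2.
Proof. by case: a => a []. Qed.

Lemma RsetE X : (X \in Rset) = (X \in Xfam n) && [exists g : dg m, g.2 && (dact X g == X)].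
Proof. by rewrite /Rset in_set. Qed.

Lemma Rset_act X g : X \in Rset -> dact X g \in Rset.
Proof.
rewrite !RsetE => /andP[XF /existsP[r /andP[r2 /eqP rX]]].
rewrite Xfam_act //; apply/existsP; exists (g^-1 * r * g).
rewrite !dmul2 dinv2 r2; case: g.2 => //=.
all: by rewrite -!dactM !mulgA mulgV mul1g dactM rX.
Qed.

Lemma acts_R : [acts setT, on Rset | dA m].
Proof.
apply/actsP => g _ X; apply/idP/idP => [H|]; last exact: Rset_act.
by have := Rset_act g^-1 H; rewrite /= -dactM mulgV dact1.
Qed.
End A.

Lemma card_sum (T : finType) (A : {pred T}) : #|A| = \sum_(x : T) (x \in A).
Proof. by rewrite -sum1_card big_mkcond /=; apply: eq_bigr => x _; case: (x \in A). Qed.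

Section A.
Variable m : nat.
Local Notation n := m.+1.
Local Open Scope group_scope.

Lemma FixE (a : dg m) : 'Fix_(Rset m | dA m)[a] = [set X in Rset m | dact X a == X].
Proof.
apply/setP=> X; rewrite in_setI [RHS]in_set; congr andb; exact/afix1P/eqP.
Qed.

Lemma rot_refl :
  \sum_(a : dg m | a.2) #|'Fix_(Rset m | dA m)[a]| =
  \sum_(a : dg m | ~~ a.2) #|'Fix_(Rset m | dA m)[a]|.
Proof.
under eq_bigr do rewrite FixE card_sum.
under [RHS]eq_bigr do rewrite FixE card_sum.
rewrite exchange_big [RHS]exchange_big; apply: eq_bigr => X _.
case XR: (X \in Rset m); last first.
  by rewrite !big1 // => a _; rewrite inE XR.
move: (XR); rewrite RsetE => /andP[_ /existsP[r /andP[r2 /eqP rX]]].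
rewrite (reindex_inj (mulgI r)) /=; apply: eq_big => a.
  by rewrite r2.
move=> _; rewrite !in_set.
by rewrite dactM rX.
Qed.

Lemma sum_refl :
  \sum_(k : 'I_n) #|[set X in Xfam n | dact X (k, true) == X]| =
  (#|orbit (dA m) setT @: Rset m| * n)%N.
Proof.
have FC := Frobenius_Cauchy (acts_R m).
rewrite cardsT card_prod card_ord card_bool (bigID (fun a : dg m => a.2)) /= in FC.
have e : forall (P : pred (dg m)) (F : dg m -> nat),
    \sum_(i in [set: dg m] | P i) F i = \sum_(i | P i) F i.
  by move=> P F; apply: eq_bigl => i; rewrite in_setT.
rewrite !e -rot_refl addnn mulnA -!muln2 in FC.
move/eqP: FC; rewrite eqn_pmul2r // => /eqP <-.
rewrite (eq_bigl (fun a : dg m => a \in [set (k, true) | k : 'I_n])); last first.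
  move=> [a b] /=; apply/idP/imsetP => [-> |[k _ [_ ->]]] //; by exists a.
rewrite big_imset /=; last by move=> x y _ _ [].
apply: eq_bigr => k _; rewrite FixE; apply: eq_card => X; rewrite [in RHS]in_set RsetE [in LHS]in_set.
case fX: (dact X (k, true) == X); rewrite ?andbF ?andbT //.
rewrite andb_idr // => _; apply/existsP; exists (k, true); by rewrite fX.
Qed.
End A.

Section A.
Variable m : nat.
Local Notation n := m.+1.
Local Open Scope group_scope.

Lemma refl_orbitsE : refl_orbits n = orbit (dA m) setT @: Rset m.
Proof.
rewrite /refl_orbits.
have -> : [set X in Xfam n | ~~ (Stab X \subset rotations n)] = Rset m.
  apply/setP => X; rewrite RsetE in_set; congr andb.
  apply/subsetPn/existsP => [[g] gS gR|[g /andP[g2 /eqP gX]]].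
    exists g; move: gS gR; rewrite !inE negbK act_setE => -> ->; by [].
  exists g; rewrite !inE ?g2 // ?act_setE; exact/eqP.
have oE : forall X, orbit_of X = orbit (dA m) setT X.
  move=> X; apply/setP => Y; rewrite /orbit_of.
  apply/imsetP/imsetP => [[g _ ->]|[g _ ->]]; exists g; rewrite ?inE ?act_setE //.
apply/setP => O; apply/imsetP/imsetP => [[X XR ->]|[X XR ->]]; exists X; rewrite ?oE //.
Qed.
End A.

Section A.
Variable m : nat.
Local Notation n := m.+1.
Local Open Scope group_scope.

Definition fixc (k : 'I_n) := #|[set X in Xfam n | dact X (k, true) == X]|.

Lemma fixc_conj (k j : 'I_n) : fixc k = fixc (k + j + j)%R.
Proof.
pose s : dg m := (j, false).
have ce : ((k + j + j)%R, true) = s^-1 * (k, true) * s.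
  change (((k + j + j)%R, true) = dmul (dmul (dinv (j, false)) (k, true)) (j, false)).
  by rewrite /dmul /dinv /= opprK addrC addrA.
rewrite /fixc ce -(card_imset _ (act_inj (dA m) s)); apply: eq_card => Y.
rewrite inE; apply/imsetP/andP => [[X] |[YF /eqP YE]].
  rewrite inE => /andP[XF /eqP XE] ->; split; first exact: Xfam_act.
  by rewrite /= -!dactM !mulgA mulgV mul1g dactM XE.
exists (dact Y s^-1); last by rewrite /= -dactM mulVg dact1.
rewrite inE Xfam_act //=; apply/eqP.
by rewrite -dactM -{2}YE -dactM mulgK.
Qed.
End A.

Section A.
Variable m : nat.
Local Notation n := m.+1.

Lemma val_kjj (k : 'I_n) x : nat_of_ord (k + inZp x + inZp x)%R = (k + x + x) %% n.
Proof. by rewrite /= !modnDmr modnDml. Qed.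

Lemma fixc_to (k : 'I_n) (t : 'I_n) x : (k + x + x) %% n = t -> fixc k = fixc t.
Proof.
move=> e; rewrite (fixc_conj k (inZp x)); congr fixc; apply: val_inj.
exact: (etrans (val_kjj k x) e).
Qed.

Lemma fixc_odd (k : 'I_n) : odd n -> fixc k = fixc (ord_max : 'I_n).
Proof.
move=> on; apply: (fixc_to (x := (m - k) * (n./2 + 1))) => /=.
have e : k + (m - k) * (n./2 + 1) + (m - k) * (n./2 + 1) = (m - k) * n + m.
  have := ltn_ord k; have := odd_double_half n; rewrite on /=.
  move: (n./2) => h; nia.
by rewrite e modnMDl modn_small.
Qed.

Lemma fixc_even (k : 'I_n) : ~~ odd n ->
  fixc k = if odd k then fixc (ord_max : 'I_n) else fixc (ord0 : 'I_n).
Proof.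
move=> en; case ok: (odd k).
  apply: (fixc_to (x := (m - k)./2)) => /=.
  have e : k + (m - k)./2 + (m - k)./2 = m.
    have := ltn_ord k; have := odd_double_half (m - k).
    rewrite oddB; last by rewrite -ltnS.
    move: en; rewrite /= ok => /negbNE -> /=; move: ((m-k)./2) => h; lia.
  by rewrite e modn_small.
apply: (fixc_to (x := (n - k)./2)) => /=.
have e : k + (n - k)./2 + (n - k)./2 = n.
  have := ltn_ord k; have := odd_double_half (n - k).
  rewrite oddB; last exact: ltnW.
  move: en; rewrite ok => /negbTE -> /=; move: ((n-k)./2) => h; lia.
by rewrite e modnn.
Qed.
End A.

Lemma sum_parity h A B :
  \sum_(0 <= k < h.*2) (if odd k then A else B) = h * (A + B).
Proof.
elim: h => [|h IH]; first by rewrite big_geq.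
rewrite doubleS !big_nat_recr //= IH odd_double /=; lia.
Qed.

Section A.
Variable m : nat.
Local Notation n := m.+1.

Theorem partA : #|refl_orbits n| * n =
  if odd n then n * fixc (ord_max : 'I_n)
  else n./2 * (fixc (ord_max : 'I_n) + fixc (ord0 : 'I_n)).
Proof.
rewrite refl_orbitsE -sum_refl -/(fixc _).
have -> : \sum_(k < n) #|[set X in Xfam n | dact X (k, true) == X]| =
          \sum_(k < n) fixc k by [].
case: ifP => on.
  under eq_bigr do rewrite (fixc_odd _ on).
  by rewrite sum_nat_const card_ord.
under eq_bigr do rewrite (fixc_even _ (negbT on)).
rewrite -(big_mkord xpredT (fun k => if odd k then fixc (ord_max : 'I_n) else fixc (ord0 : 'I_n))).
have := odd_double_half n; rewrite on add0n => e.
by rewrite -{1}e sum_parity.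
Qed.
End A.

Section B.
Variable n : nat.
Definition setL (L : seq bool) : {set 'I_n} := [set i : 'I_n | nth false L i].
Definition listX (X : {set 'I_n}) : seq bool := [seq i \in X | i <- enum 'I_n].

Lemma listXK X : setL (listX X) = X.
Proof.
apply/setP => i; rewrite inE /listX (nth_map i) ?size_enum_ord //.
by rewrite nth_ord_enum.
Qed.

Lemma setL_inj L1 L2 : size L1 = n -> size L2 = n -> setL L1 = setL L2 -> L1 = L2.
Proof.
move=> s1 s2 e; apply: (@eq_from_nth _ false); first by rewrite s1 s2.
move=> i; rewrite s1 => lin.
by move/setP: e => /(_ (Ordinal lin)); rewrite !inE.
Qed.

Lemma card_words (P : pred {set 'I_n}) :
  #|[set X | P X]| = count (fun L => P (setL L)) (words n).
Proof.
set s := filter P (map setL (words n)).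
have us : uniq s.
  apply: filter_uniq; rewrite map_inj_in_uniq ?uniq_words // => L1 L2.
  by rewrite !mem_words => /eqP ? /eqP ?; apply: setL_inj.
have -> : #|[set X | P X]| = #|s|.
  apply: eq_card => X; rewrite inE mem_filter; case: (P X) => //=.
  apply/esym/mapP; exists (listX X); rewrite ?listXK //.
  by rewrite mem_words size_map size_enum_ord.
by move/card_uniqP: us => ->; rewrite size_filter count_map.
Qed.
End B.

Section B.
Variable m : nat.
Local Notation n := m.+1.

Lemma inX_setL L j : size L = n -> inX (setL n L) j = cycb L j.
Proof. by move=> sL; rewrite inXE inE /cycb sL. Qed.

Lemma cycb_mod L j : size L = n -> cycb L (j %% n) = cycb L j.
Proof. by move=> sL; rewrite /cycb sL modn_mod. Qed.
Lemma cycb_modS L j : size L = n -> cycb L (j %% n).+1 = cycb L j.+1.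
Proof. by move=> sL; rewrite /cycb sL -addn1 modnDml addn1. Qed.

Lemma Xfam_setL L : size L = n -> (setL n L \in Xfam n) = cycok L.
Proof.
move=> sL; rewrite inE /cycok sL; apply/andP/allP => [[/forallP H1 /forallP H2] i|H].
  rewrite mem_iota /= => lin; have := H1 (Ordinal lin); have := H2 (Ordinal lin).
  have lin' : i.+1 %% n < n by apply: ltn_pmod.
  have := H1 (Ordinal lin'); rewrite /= !inX_setL // cycb_mod // cycb_modS //.
  by rewrite /W3 => -> -> ->.
split; apply/forallP => i; have := H i; rewrite mem_iota /= ltn_ord !inX_setL //;
  by case/(_ isT)/and3P.
Qed.
End B.

Section C.
Variable m : nat.
Local Notation n := m.+1.
Local Open Scope group_scope.

Lemma dact_refl_eq (K : 'I_n) X :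
  (dact X (K, true) == X) = [forall i : 'I_n, ((K - i)%R \in X) == (i \in X)].
Proof.
have ginv : ((K, true) : dg m)^-1 = (K, true) by [].
apply/eqP/forallP => [H i|H].
  by rewrite -{2}H mem_dact ginv /fmap /=.
apply/setP => i; rewrite mem_dact ginv /fmap /=; exact/eqP/H.
Qed.

Lemma valB (K i : 'I_n) : nat_of_ord (K - i)%R = (K + (n - i)) %% n.
Proof. by rewrite /= modnDmr. Qed.

Lemma pal_setL L : size L = n ->
  (dact (setL n L) (ord_max, true) == setL n L) = (L == rev L).
Proof.
move=> sL; rewrite dact_refl_eq; apply/forallP/eqP => [H|pL i].
  apply: (@eq_from_nth _ false); first by rewrite size_rev.
  move=> i; rewrite sL => lin; rewrite nth_rev sL //.
  move/eqP: (H (Ordinal lin)); rewrite !inE valB /=.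
  by rewrite (_ : m + (n - i) = (m - i) + n) ?modnDr ?modn_small; try lia; move=> ->.
have lin := ltn_ord i.
rewrite !inE valB /= (_ : m + (n - i) = (m - i) + n) ?modnDr ?modn_small; try lia.
by rewrite {2}pL nth_rev sL // subSS.
Qed.

Lemma sym0_setL L : size L = n ->
  (dact (setL n L) (ord0, true) == setL n L) = (behead L == rev (behead L)).
Proof.
move=> sL; rewrite dact_refl_eq; apply/forallP/eqP => [H|pL i].
  apply: (@eq_from_nth _ false); first by rewrite size_rev.
  move=> i; rewrite size_behead sL /= => lin; rewrite nth_rev size_behead sL //=.
  have li1 : i.+1 < n by lia.
  move/eqP: (H (Ordinal li1)); rewrite !inE valB /= add0n.
  rewrite !nth_behead modn_small; last by lia.
  by rewrite (_ : n - i.+1 = (m - i.+1).+1) //; lia.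
rewrite !inE valB /= add0n.
move: (ltn_ord i); case: i => [[|i] li] /= _; first by rewrite subn0 modnn.
rewrite modn_small; last by lia.
case: L sL pL => // c t [st] pt.
rewrite /= in pt; rewrite (_ : n - i.+1 = (m - i.+1).+1) /=; last by lia.
by rewrite {2}pt nth_rev ?st //; lia.
Qed.
End C.

Section D.
Variable m : nat.
Local Notation n := m.+1.

Lemma fixc_max_count :
  fixc (ord_max : 'I_n) = count (fun L => cycok L && (L == rev L)) (words n).
Proof.
rewrite /fixc card_words; apply: eq_in_count => L; rewrite mem_words => /eqP sL.
by rewrite Xfam_setL // pal_setL.
Qed.

Lemma fixc_0_count :
  fixc (ord0 : 'I_n) = count (fun L => cycok L && (behead L == rev (behead L))) (words n).
Proof.
rewrite /fixc card_words; apply: eq_in_count => L; rewrite mem_words => /eqP sL.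
by rewrite Xfam_setL // sym0_setL.
Qed.
End D.

Lemma count_P h : count (fun L => cycok L && (L == rev L)) (words h.+1.*2.+1) = padq h.+2.
Proof.
rewrite -fP_pad (eq_count (a2 := fun L => (L == rev L) && cycok L)); last by move=> L; rewrite andbC.
rewrite pal_odd; apply: eq_in_count => v; rewrite mem_words => /eqP sv.
by rewrite shapeP // sv.
Qed.

Lemma count_E h : count (fun L => cycok L && (L == rev L)) (words h.+2.*2) = fE h.+1.
Proof.
rewrite (eq_count (a2 := fun L => (L == rev L) && cycok L)); last by move=> L; rewrite andbC.
rewrite pal_even; apply: eq_in_count => v; rewrite mem_words => /eqP sv.
by rewrite shapeEE // sv.
Qed.

Lemma count_Vc h c : count (fun s => cycok (c :: s) && (s == rev s)) (words h.+1.*2.+1) =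
  count (fun v => okw (head false v :: c :: v ++ [:: penult v])) (words h.+2).
Proof.
rewrite (eq_count (a2 := fun L => (L == rev L) && cycok (c :: L))); last by move=> L; rewrite andbC.
rewrite pal_odd; apply: eq_in_count => v; rewrite mem_words => /eqP sv.
by rewrite shapeV // sv.
Qed.

Lemma count_V h : count (fun L => cycok L && (behead L == rev (behead L))) (words h.+2.*2) = fV h.
Proof. by rewrite doubleS count_wordsS /fV -!count_Vc. Qed.

Theorem proposition3p4 (n : nat) (hn : 1 <= n) : #|refl_orbits n| = padr n.
Proof.
case: n hn => [//|m] _.
have := partA m; rewrite /padr.
case: ifP => on.
  rewrite mulnC => /eqP; rewrite eqn_pmul2l // => /eqP ->.
  rewrite fixc_max_count.
  case: m on => [|[|m]] on //.
  have om : odd m = false by move: on => /=; case: (odd m).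
  have := odd_double_half m; rewrite om add0n => e.
  have -> : m.+3 = (m./2).+1.*2.+1 by rewrite doubleS -{1}e.
  rewrite count_P; congr padq.
  by rewrite -{2}e /= -add1n -addn1 addnC; lia.
move/eqP; rewrite mulnC fixc_max_count fixc_0_count.
case: m on => [|[|m]] on //.
  have c1 : count (fun L => cycok L && (L == rev L)) (words 2) = 0 by vm_compute.
  have c2 : count (fun L => cycok L && (behead L == rev (behead L))) (words 2) = 2 by vm_compute.
  rewrite c1 c2 /= => /eqP H.
  have : 2 * #|refl_orbits 2| = 2 * 1 by rewrite H.
  by move/eqP; rewrite eqn_pmul2l // => /eqP ->.
have om : odd m = true by move: on => /=; case: (odd m).
have := odd_double_half m; rewrite om => e.
have -> : m.+3 = (m./2).+2.*2 by rewrite !doubleS -{1}e.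
rewrite count_E count_V fEV_pad doubleK => /eqP H.
have H2 : (m./2).+2 * (2 * #|refl_orbits (m./2).+2.*2|) = (m./2).+2 * (2 * padq (m./2).+4).
  by rewrite -H; lia.
move/eqP: H2; rewrite eqn_pmul2l // eqn_pmul2l // => /eqP ->.
by rewrite addn2.
Qed.
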